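(* Let $(X,T)$ be a topological dynamical system and fix the system of coefficients $c_S^n=2^{-n}$. Then for any open cover $\mathscr U$ of $X$, $\operatorname{Acc}(X,\mathscr U,T)=\frac12\operatorname{Asc}(X,\mathscr U,T)$.
   Context: $(X,T)$: compact Hausdorff $X$, continuous $T$. $n^*=\{0,\dots,n-1\}$; $\mathscr U_S=\bigvee_{i\in S}T^{-i}\mathscr U$ ($\mathscr U_\emptyset=\{X\}$); $N(\mathscr U)$ is the minimal cardinality of a subcover. $\operatorname{Asc}(X,\mathscr U,T)=\lim_{n\to\infty}\frac1n\sum_{S\subset n^*}c_S^n\log N(\mathscr U_S)$ and the average configuration complexity is $\operatorname{Acc}(X,\mathscr U,T)=\lim_{n\to\infty}\frac1n\sum_{S\subset n^*,\,0\in S}c_S^n\log N(\mathscr U_S)$. *)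

(* Defs.v *)
From HB Require Import structures.
From mathcomp Require Import all_boot all_order all_algebra.
From mathcomp Require Import all_classical all_reals all_analysis.
Set Implicit Arguments. Unset Strict Implicit. Unset Printing Implicit Defensive.
Import Order.TTheory GRing.Theory Num.Theory.
Local Open Scope classical_set_scope.
Local Open Scope ring_scope.

Section Defs.
Context {X : topologicalType}.

Definition has_subcover_of_size (U : set (set X)) (n : nat) : Prop :=
  exists f : 'I_n -> set X, (forall i, U (f i)) /\ (forall x, exists i, f i x).

(* N(U): minimal cardinality of a subcover (0 if no finite subcover exists,
   which never happens for open covers of a compact space). *)
Definition Ncov (U : set (set X)) : nat :=
  match pselect (exists n, `[< has_subcover_of_size U n >]) with
  | left h => ex_minn h
  | right _ => 0%N
  end.

(* U_S = \/_{i in S} T^{-i} U, for S a subset of n^* = {0,...,n-1};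
   U_emptyset = {X}. *)
Definition joinS (T : X -> X) (U : set (set X)) (n : nat) (S : {set 'I_n})
  : set (set X) :=
  [set V | exists A : 'I_n -> set X,
     (forall i, i \in S -> U (A i)) /\
     V = \bigcap_(i in [set i : 'I_n | i \in S]) ((iter i T) @^-1` (A i))].

Definition has0 (n : nat) (S : {set 'I_n}) : bool :=
  [exists i in S, val i == 0%N].

Definition asc_seq (R : realType) (T : X -> X) (U : set (set X)) (n : nat) : R :=
  n%:R^-1 * \sum_(S : {set 'I_n}) (2%:R ^- n) * ln (Ncov (joinS T U S))%:R.

Definition acc_seq (R : realType) (T : X -> X) (U : set (set X)) (n : nat) : R :=
  n%:R^-1 * \sum_(S : {set 'I_n} | has0 S) (2%:R ^- n) * ln (Ncov (joinS T U S))%:R.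

End Defs.

(* Main.v *)
From HB Require Import structures.
From mathcomp Require Import all_boot all_order all_algebra.
From mathcomp Require Import all_classical all_reals all_analysis.
From mathcomp Require Import lra ring.
From mathcomp Require Import zify.
From mathcomp Require Import finmap.
Import Order.TTheory GRing.Theory Num.Theory numFieldNormedType.Exports.
Local Open Scope classical_set_scope.
Local Open Scope ring_scope.
Require Import Defs.

Section Fekete.
Variable R : realType.
Variable b : nat -> R.
Hypothesis b0 : forall n, 0 <= b n.
Hypothesis bsub : forall m n, b (m + n)%N <= b m + b n.

Lemma bmul q k r : b (q * k + r)%N <= q%:R * b k + b r.
Proof.
elim: q => [|q IH]; first by rewrite mul0n mul0r add0n add0r.
rewrite mulSn -addnA (le_trans (bsub _ _)) // -natr1 mulrDl mul1r; lra.
Qed.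


Let E := [set n%:R^-1 * b n | n in [set n | (0 < n)%N]].

Lemma E_lb : has_lbound E.
Proof. by exists 0 => _ [n _ <-]; rewrite mulr_ge0 // invr_ge0. Qed.

Lemma fekete : (fun n => n%:R^-1 * b n) @ \oo --> inf E.
Proof.
apply/cvgrPdist_le => e e0.
have hinf : has_inf E by split; [exists (1%:R^-1 * b 1); exists 1%N|exact: E_lb].
have [_ [k /= k0 <-] hk] := inf_adherent (divr_gt0 e0 (ltr0n _ 2)) hinf.
set M := \sum_(r < k) b r.
have M0 : 0 <= M by apply: sumr_ge0.
have bM r : (r < k)%N -> b r <= M.
  move=> rk; rewrite /M (bigD1 (Ordinal rk)) //= lerDl; exact: sumr_ge0.
set N := (Num.truncn (M / (e / 2))).+1.
exists N => // n /= Nn.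
have n0 : (0 < n)%N by apply: leq_trans Nn.
have Nlt := truncnS_gt (M / (e / 2)).
have linf : inf E <= n%:R^-1 * b n by apply: ge_inf; [exact: E_lb|exists n].
rewrite distrC ger0_norm ?subr_ge0 //.
have key : b n <= (n %/ k)%:R * b k + M.
  rewrite {1}(divn_eq n k) (le_trans (bmul _ _ _)) // lerD2l bM // ltn_mod.
  by [].
set x := k%:R^-1 * b k in hk *.
have k0' : 0 < k%:R :> R by rewrite ltr0n.
have n0' : 0 < n%:R :> R by rewrite ltr0n.
have bkx : b k = k%:R * x by rewrite /x mulrA mulfV ?mulr1 ?mul1r // gt_eqF.
have x0 : 0 <= x by rewrite /x mulr_ge0 // invr_ge0.
have qk : (n %/ k)%:R * k%:R <= n%:R :> R by rewrite -natrM ler_nat leq_divM.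
have Mn : M <= n%:R * (e / 2).
  have : M / (e / 2) < n%:R by rewrite (lt_le_trans Nlt) // ler_nat.
  rewrite ltr_pdivrMr ?divr_gt0 // => /ltW; rewrite mulrC.
  by [].
have : b n <= n%:R * (x + e / 2).
  rewrite (le_trans key) // bkx mulrA mulrDr; apply: lerD => //.
  by rewrite ler_wpM2r.
rewrite -ler_pdivrMl // => H.
rewrite lerBlDl; apply: le_trans H _; lra.
Qed.

End Fekete.

Definition pX {X : topologicalType} (x : X) : Type := X.
HB.instance Definition _ (X : topologicalType) (x : X) := Topological.copy (pX x) X.
HB.instance Definition _ (X : topologicalType) (x : X) := isPointed.Build (pX x) x.

Lemma compact_cover' (X : topologicalType) (x : X) (A : set X) : compact A -> cover_compact A.
Proof.
move=> h; have e := @compact_cover (pX x).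
have h' : compact (A : set (pX x)) by exact h.
rewrite e in h'; exact h'.
Qed.

Lemma split_l m n (i : 'I_m) : fintype.split (lshift n i) = inl i.
Proof. exact: (unsplitK (inl i : 'I_m + 'I_n)). Qed.
Lemma split_r m n (i : 'I_n) : fintype.split (rshift m i) = inr i.
Proof. exact: (unsplitK (inr i : 'I_m + 'I_n)). Qed.

Definition comb {m n} (A : {set 'I_m}) (B : {set 'I_n}) : {set 'I_(m + n)} :=
  [set lshift n i | i in A] :|: [set rshift m j | j in B].

Lemma comb_bij m n :
  bijective (fun p : {set 'I_m} * {set 'I_n} => comb p.1 p.2).
Proof.
exists (fun S : {set 'I_(m + n)} => ([set i | lshift n i \in S]%SET, [set j | rshift m j \in S]%SET)).
  move=> [A B] /=; congr pair; apply/setP => i; rewrite inE finset.in_setU.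
    rewrite (mem_imset _ _ (@lshift_inj _ _)).
    case: (i \in A) => //=; apply/negP => /imsetP[j _ /(congr1 val)] /=.
    by have := ltn_ord i; lia.
  rewrite (mem_imset _ _ (@rshift_inj _ _)).
  case: (i \in B); rewrite ?orbT //= orbF; apply/negP => /imsetP[j _ /(congr1 val)] /=.
  by have := ltn_ord j; lia.
move=> S; apply/setP => k; rewrite finset.in_setU.
have [i ki|j kj] := splitP k.
  have -> : k = lshift n i by apply: val_inj.
  rewrite (mem_imset _ _ (@lshift_inj _ _)) inE.
  case: (_ \in S) => //=; apply/negP => /imsetP[j _ /(congr1 val)] /=.
  by have := ltn_ord i; lia.
have -> : k = rshift m j by apply: val_inj.
rewrite (mem_imset _ _ (@rshift_inj _ _)) inE.
case: (_ \in S); rewrite ?orbT //= orbF; apply/negP => /imsetP[i _ /(congr1 val)] /=.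
by have := ltn_ord i; lia.
Qed.

Lemma sum_comb (R : realType) m n (P : pred {set 'I_(m + n)}) (G : {set 'I_(m + n)} -> R) :
  \sum_(S | P S) G S = \sum_(A : {set 'I_m}) \sum_(B | P (comb A B)) G (comb A B).
Proof.
rewrite pair_big_dep (reindex (fun p : {set 'I_m} * {set 'I_n} => comb p.1 p.2)) /=.
  by [].
have [g h1 h2] := comb_bij m n; exists g => x _; [exact: h1|exact: h2].
Qed.

Lemma card_sets n : #|{: {set 'I_n}}| = (2 ^ n)%N.
Proof. by rewrite -cardsT -powersetT card_powerset cardsT card_ord. Qed.

Lemma lnn_ge0 (R : realType) k : 0 <= ln (k%:R : R).
Proof. by case: k => [|k]; [rewrite ln0|apply: ln_ge0; rewrite ler1n]. Qed.

Lemma ln_sub (R : realType) (a b c : nat) : (a <= b * c)%N ->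
  ln (a%:R : R) <= ln b%:R + ln c%:R.
Proof.
case: a => [|a] h; first by rewrite ln0 // addr_ge0 // lnn_ge0.
have b0 : (0 < b)%N by case: b h.
have c0 : (0 < c)%N by case: c h; rewrite ?muln0.
rewrite -lnM ?posrE ?ltr0n // -natrM ler_ln ?posrE ?ltr0n ?muln_gt0 ?b0 ?c0 //.
by rewrite ler_nat.
Qed.

Lemma ord1_0 (i : 'I_1) : i = ord0.
Proof. by apply: val_inj; case: i => -[]. Qed.

Lemma setT1 (A : {set 'I_1}) : (ord0 \in A) = (A == [set: 'I_1]%SET).
Proof.
apply/idP/eqP => [h|->]; last by rewrite finset.in_setT.
apply/setP => i; rewrite finset.in_setT.
rewrite (ord1_0 i).
exact: h.
Qed.

Lemma set01 (A : {set 'I_1}) : (A != [set: 'I_1]%SET) = (A == finset.set0).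
Proof.
rewrite -setT1; apply/idP/eqP => [h|->]; last by rewrite finset.in_set0.
apply/setP => i; rewrite finset.in_set0.
rewrite (ord1_0 i).
exact: negbTE h.
Qed.

Lemma has0_comb k (A : {set 'I_1}) (B : {set 'I_k}) : has0 (comb A B) = (ord0 \in A).
Proof.
apply/existsP/idP => [[i /andP[]]|h].
  rewrite finset.in_setU => /orP[/imsetP[i' i'A ->]|/imsetP[j' j'B ->]] //=.
    by rewrite (ord1_0 i') in i'A.
exists (lshift k ord0); rewrite finset.in_setU imset_f //.
Qed.

Section Topo.
Context {X : topologicalType} (T : X -> X) (U : set (set X)).
Hypotheses (Tc : continuous T) (Uo : forall A, U A -> open A)
  (Ucov : \bigcup_(A in U) A = [set: X]) (Xc : compact [set: X]).

Lemma Ncov_le (V : set (set X)) k : has_subcover_of_size V k -> (Ncov V <= k)%N.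
Proof.
move=> h; rewrite /Ncov; case: pselect => [e|ne] //.
case: ex_minnP => m _ hm; apply: hm; exact/asboolP.
Qed.

Lemma Ncov_ok (V : set (set X)) : (exists k, has_subcover_of_size V k) ->
  has_subcover_of_size V (Ncov V).
Proof.
move=> [k hk]; rewrite /Ncov; case: pselect => [e|ne].
  by case: ex_minnP => m /asboolP.
by exfalso; apply: ne; exists k; exact/asboolP.
Qed.

Lemma subcover_fin (I : finType) (V : set (set X)) (f : I -> set X) :
  (forall i, V (f i)) -> (forall x, exists i, f i x) ->
  has_subcover_of_size V #|I|.
Proof.
move=> hV hc; exists (fun k => f (enum_val k)); split => [k|x]; first exact: hV.
have [i fi] := hc x; exists (enum_rank i); by rewrite enum_rankK.
Qed.

Lemma iter_cont i : continuous (iter i T).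
Proof.
elim: i => [|i IH] x /=; first exact: cvg_id.
exact: (continuous_comp (IH x) (Tc _)).
Qed.

Lemma joinS_open n (S : {set 'I_n}) V : joinS T U S V -> open V.
Proof.
move=> [A [HA ->]]; rewrite openE => x Vx.
have : \forall y \near x, forall i : 'I_n, (i \in S -> A i (iter i T y)).
  apply: filter_forall => i; case: (boolP (i \in S)) => iS; last first.
    by apply: nearW.
  have op : open (iter i T @^-1` A i).
    apply: open_comp; [move=> y _; exact: iter_cont | exact: Uo (HA _ iS)].
  apply: filterS (open_nbhs_nbhs (conj op (Vx i iS))) => y yA _; exact: yA.
by apply: filterS => y hy i /= iS; exact: hy.
Qed.

Lemma joinS_cover n (S : {set 'I_n}) x : exists V, joinS T U S V /\ V x.
Proof.
have h : forall i : 'I_n, exists A, U A /\ A (iter i T x).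
  move=> i; have : [set: X] (iter i T x) by [].
  by rewrite -Ucov => -[A UA Ax]; exists A.
have [f hf] := choice h.
exists (\bigcap_(i in [set i | i \in S]) iter i T @^-1` f i); split.
  by exists f; split => // i _; exact: (hf i).1.
by move=> i _; exact: (hf i).2.
Qed.

Lemma joinS_fin n (S : {set 'I_n}) : exists k, has_subcover_of_size (joinS T U S) k.
Proof.
case: (pselect (exists x : X, True)) => [[x0 _]|nX]; last first.
  exists 0%N, (fun _ => set0); split => [[]//|x].
  by exfalso; apply: nX; exists x.
have := @compact_cover' X x0 _ Xc => /(_ (set X) (joinS T U S) id).
case.
- move=> V; exact: joinS_open.
- by move=> x _; have [V [HV Vx]] := joinS_cover _ S x; exists V.
move=> D' sub cov; eexists.
apply: (@subcover_fin _ _ (fun y : D' => val y)).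
  move=> y; have := sub _ (fsvalP y); by rewrite in_setE.
move=> x; have [V /= VD Vx] := cov x I.
by exists [` VD]%fset.
Qed.


Lemma Ncov_comb m n (A : {set 'I_m}) (B : {set 'I_n}) :
  (Ncov (joinS T U (comb A B)) <= Ncov (joinS T U A) * Ncov (joinS T U B))%N.
Proof.
have [f1 [hf1 cf1]] := Ncov_ok _ (joinS_fin _ A).
have [f2 [hf2 cf2]] := Ncov_ok _ (joinS_fin _ B).
have -> : (Ncov (joinS T U A) * Ncov (joinS T U B))%N =
   #|{: 'I_(Ncov (joinS T U A)) * 'I_(Ncov (joinS T U B))}|.
  by rewrite card_prod !card_ord.
apply: (Ncov_le _ _ (@subcover_fin ('I_(Ncov (joinS T U A)) * 'I_(Ncov (joinS T U B)))%type _ (fun p => f1 p.1 `&` iter m T @^-1` f2 p.2) _ _)); last first.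
  move=> x; have [i fi] := cf1 x; have [j fj] := cf2 (iter m T x).
  by exists (i, j).
move=> [i j] /=.
have [A1 [hA1 e1]] := hf1 i; have [A2 [hA2 e2]] := hf2 j.
exists (fun k : 'I_(m + n) => match fintype.split k with inl i => A1 i | inr j => A2 j end).
split.
  move=> k; rewrite finset.in_setU => /orP[/imsetP[i' i'A ->]|/imsetP[j' j'B ->]].
    by rewrite split_l; exact: hA1.
  by rewrite split_r; exact: hA2.
rewrite e1 e2; apply/seteqP; split => x /=.
  move=> [h1 h2] k; rewrite /= finset.in_setU => /orP[/imsetP[i' i'A ->]|/imsetP[j' j'B ->]].
    by rewrite split_l; exact: h1.
  by rewrite split_r /= addnC iterD; exact: h2.
move=> h; split => [i' i'A|j' j'B] /=.
  have := h (lshift n i'); rewrite /= finset.in_setU mem_imset ?i'A //; last exact: lshift_inj.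
  by rewrite split_l => /(_ isT).
have := h (rshift m j'); rewrite /= finset.in_setU (mem_imset _ _ (@rshift_inj _ _)) j'B orbT.
by rewrite split_r /= addnC iterD => /(_ isT).
Qed.


Variable R : realType.
Definition F n (S : {set 'I_n}) : R := ln (Ncov (joinS T U S))%:R.
Arguments F {n} S.
Definition bseq n : R := \sum_(S : {set 'I_n}) 2%:R ^- n * F S.

Lemma F_comb m n (A : {set 'I_m}) (B : {set 'I_n}) : F (comb A B) <= F A + F B.
Proof. exact: ln_sub (Ncov_comb _ _ A B). Qed.

Lemma F_ge0 n (S : {set 'I_n}) : 0 <= F S.
Proof. exact: lnn_ge0. Qed.

Lemma bseq_ge0 n : 0 <= bseq n.
Proof. by apply: sumr_ge0 => S _; rewrite mulr_ge0 ?F_ge0 // invr_ge0 exprn_ge0. Qed.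

Lemma sum_const_pow n (x : R) : \sum_(B : {set 'I_n}) x = 2%:R ^+ n * x.
Proof.
rewrite sumr_const (_ : #|_| = 2 ^ n)%N; last exact: card_sets.
by rewrite -[LHS]mulr_natr natrX mulrC.
Qed.

Lemma bsub m n : bseq (m + n) <= bseq m + bseq n.
Proof.
rewrite /bseq (sum_comb _ _ _ xpredT) /=.
apply: (@le_trans _ _ (\sum_(A : {set 'I_m}) \sum_(B : {set 'I_n})
   (2%:R ^- (m + n) * F A + 2%:R ^- (m + n) * F B))).
  apply: ler_sum => A _; apply: ler_sum => B _; rewrite -mulrDr.
  by rewrite ler_wpM2l ?F_comb // invr_ge0 exprn_ge0.
rewrite (eq_bigr (fun A : {set 'I_m} => \sum_(B : {set 'I_n}) 2%:R ^- (m + n) * F A + \sum_(B : {set 'I_n}) 2%:R ^- (m + n) * F B)); last first.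
  by move=> A _; exact: big_split.
rewrite (big_split _ _ _ (fun A : {set 'I_m} => \sum_(B : {set 'I_n}) 2%:R ^- (m + n) * F A)) /=.
rewrite [X in _ + X <= _]exchange_big /=.
have e2 : forall k, (2%:R ^+ k : R) != 0 by move=> k; rewrite expf_neq0 // pnatr_eq0.
apply: lerD; apply: ler_sum => A _; rewrite sum_const_pow exprD invfM; rewrite le_eqVlt; apply/orP; left; apply/eqP.
  by field; rewrite ?e2.
by field; rewrite ?e2.
Qed.


Definition accraw n : R := \sum_(S : {set 'I_n} | has0 S) 2%:R ^- n * F S.

Lemma acc_eq k : accraw (1 + k) =
  \sum_(B : {set 'I_k}) 2%:R ^- (1 + k) * F (comb [set: 'I_1]%SET B).
Proof.
rewrite /accraw (sum_comb _ _ _ (@has0 (1 + k))) (bigD1 [set: 'I_1]%SET) //= [X in _ + X = _]big1 ?addr0.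
  by apply: eq_bigl => B; rewrite has0_comb setT1 eqxx.
move=> A AT; apply: big_pred0 => B; rewrite has0_comb setT1; exact: negbTE AT.
Qed.

Lemma sum_comb_le k (A : {set 'I_1}) :
  \sum_(B : {set 'I_k}) 2%:R ^- (1 + k) * F (comb A B) <=
  2%:R^-1 * F A + 2%:R^-1 * bseq k.
Proof.
have e2 : forall k, (2%:R ^+ k : R) != 0 by move=> k'; rewrite expf_neq0 // pnatr_eq0.
apply: (@le_trans _ _ (\sum_(B : {set 'I_k})
   (2%:R ^- (1 + k) * F A + 2%:R ^- (1 + k) * F B))).
  by apply: ler_sum => B _; rewrite -mulrDr ler_wpM2l ?F_comb // invr_ge0 exprn_ge0.
rewrite big_split /= sum_const_pow /bseq mulr_sumr.
apply: lerD.
  rewrite exprD expr1 invfM le_eqVlt; apply/orP; left; apply/eqP; field.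
  exact: e2.
apply: ler_sum => B _; rewrite exprD expr1 invfM le_eqVlt; apply/orP; left; apply/eqP.
by rewrite mulrA.
Qed.

Lemma acc_upper k : accraw (1 + k) <= 2%:R^-1 * F [set: 'I_1]%SET + 2%:R^-1 * bseq k.
Proof. by rewrite acc_eq; exact: sum_comb_le. Qed.

Lemma acc_lower k : bseq (1 + k) <=
  accraw (1 + k) + (2%:R^-1 * F (finset.set0 : {set 'I_1}) + 2%:R^-1 * bseq k).
Proof.
rewrite {1}/bseq (sum_comb _ _ _ xpredT) (bigD1 [set: 'I_1]%SET) //=.
rewrite [X in _ + X <= _](big_pred1 finset.set0); last by move=> A; rewrite /= set01.
rewrite acc_eq lerD2l; exact: sum_comb_le.
Qed.

End Topo.


Theorem proposition2p5 (R : realType) (X : topologicalType) (T : X -> X)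
  (U : set (set X)) :
  hausdorff_space X -> compact [set: X] -> continuous T ->
  (forall A, U A -> open A) -> \bigcup_(A in U) A = [set: X] ->
  cvgn (asc_seq R T U) /\
  acc_seq R T U @ \oo --> limn (asc_seq R T U) / 2.
Proof.
move=> _ Xc Tc Uo Ucov.
set b := bseq T U R.
have ha := @fekete R b (bseq_ge0 T U R) (@bsub X T U Tc Uo Ucov Xc R).
set L := inf _ in ha.
have easc : asc_seq R T U = (fun n => n%:R^-1 * b n) by [].
rewrite easc; split; first exact: cvgP ha.
rewrite (cvg_lim (@Rhausdorff R) ha).
set w := fun k : nat => (k.+1%:R^-1 : R).
have hw : w k @[k --> \oo] --> 0 by exact: cvg_harmonic.
have hw1 : w k.+1 @[k --> \oo] --> 0 by rewrite cvg_shiftS.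
have ha1 : (k.+1%:R^-1 * b k.+1) @[k --> \oo] --> L.
  by move: ha; rewrite -cvg_shiftS.
have hh : (w k * b k) @[k --> \oo] --> L.
  rewrite -cvg_shiftS.
  have -> : (fun k => w k.+1 * b k.+1) = (fun k => (k.+1%:R^-1 * b k.+1) * (1 - w k.+1)).
    apply/funext => k /=; rewrite /w; field.
    have k0 : (0 : R) <= k%:R by rewrite ler0n.
    by apply/andP; split; rewrite gt_eqF //; lra.
  have H := cvgM ha1 (cvgB (cvg_cst (1 : R)) hw1).
  rewrite subr0 mulr1 in H; exact: H.
set c0 := 2%:R^-1 * F T U R 1 finset.set0.
set c1 := 2%:R^-1 * F T U R 1 [set: 'I_1]%SET.
rewrite -cvg_shiftS.
apply: (@squeeze_cvgr _ _ _ _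
  (fun k => k.+1%:R^-1 * b k.+1 - (w k * c0 + 2%:R^-1 * (w k * b k)))
  (fun k => w k * c1 + 2%:R^-1 * (w k * b k))).
- apply: nearW => k /=.
  have w0 : 0 <= w k by rewrite /w invr_ge0.
  have -> : acc_seq R T U k.+1 = w k * accraw T U R (1 + k) by [].
  apply/andP; split.
    have := @acc_lower X T U Tc Uo Ucov Xc R k; rewrite -lerBlDr => H.
    rewrite -[X in X - _ <= _]/(w k * b (1 + k)).
    rewrite (le_trans _ (ler_wpM2l w0 H)) // /b /c0; lra.
  have := @acc_upper X T U Tc Uo Ucov Xc R k => H.
  rewrite (le_trans (ler_wpM2l w0 H)) // /b /c1; lra.
- rewrite (_ : L / 2 = L - (0 * c0 + 2%:R^-1 * L)); last by rewrite mul0r add0r; field.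
  apply: cvgB => //; apply: cvgD; [apply: cvgM => //; exact: cvg_cst|].
  apply: cvgM => //; exact: cvg_cst.
- rewrite (_ : L / 2 = 0 * c1 + 2%:R^-1 * L); last by rewrite mul0r add0r mulrC.
  apply: cvgD; [apply: cvgM => //; exact: cvg_cst|].
  apply: cvgM => //; exact: cvg_cst.
Qed.
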